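(* Let $k\ge1$ and $n,m\in A_{2k}$. If $\max\mathcal{CG}(n)<\max\mathcal{CG}(m)$, then $n<m$.
   Context: Fibonacci numbers: $F_1=F_2=1$, $F_{n+1}=F_n+F_{n-1}$ for $n\ge2$. Chung–Graham decomposition: every positive integer $n$ has a unique representation $n=\sum_{i\ge1}c_iF_{2i}$ with $c_i\in\{0,1,2\}$, only finitely many nonzero, such that whenever $c_i=c_j=2$ with $i<j$ there is $k$ with $i<k<j$ and $c_k=0$. Let $\mathcal{CG}(n)$ be the set of $F_{2i}$ with $c_i\neq0$. For $k\ge1$, $A_{2k}=\{n\ge1:\min\mathcal{CG}(n)=F_{2k}\}$. *)

(* Defs.v *)
From mathcomp Require Import all_boot.
Set Implicit Arguments. Unset Strict Implicit. Unset Printing Implicit Defensive.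

Fixpoint fib (n : nat) : nat :=
  match n with
  | 0 => 0
  | 1 => 1
  | (p.+1 as q).+1 => fib q + fib p
  end.

(* A digit sequence c encodes (c_1, c_2, ...) : entry nth 0 c i is c_{i+1},
   the coefficient of F_{2(i+1)}; entries beyond size c are 0. *)
Definition cg_value (c : seq nat) : nat :=
  \sum_(i < size c) nth 0 c i * fib (2 * i.+1).

Definition cg_admissible (c : seq nat) : Prop :=
  (forall i, nth 0 c i <= 2) /\
  (forall i j, i < j -> nth 0 c i = 2 -> nth 0 c j = 2 ->
     exists k, i < k < j /\ nth 0 c k = 0).

(* c is the Chung-Graham decomposition of n (unique by the Chung-Graham theorem). *)
Definition is_CG (n : nat) (c : seq nat) : Prop :=
  cg_admissible c /\ cg_value c = n.

Definition CGset (c : seq nat) : seq nat :=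
  [seq fib (2 * i.+1) | i <- iota 0 (size c) & nth 0 c i != 0].

Definition seq_min (s : seq nat) : nat := foldr minn (head 0 s) s.
Definition seq_max (s : seq nat) : nat := \max_(x <- s) x.

Definition in_A (k n : nat) : Prop :=
  1 <= n /\ forall c, is_CG n c -> seq_min (CGset c) = fib (2 * k).

(* Main.v *)
Require Import Defs.
From mathcomp Require Import all_boot.
From mathcomp Require Import zify.

Definition S (c : seq nat) (a : nat) : nat := \sum_(i < a) nth 0 c i * fib (2 * i.+1).

Lemma fib_step n : fib n <= fib n.+1.
Proof. case: n => [|n] //=. exact: leq_addr. Qed.

Lemma fib_mono m n : m <= n -> fib m <= fib n.
Proof.
elim: n => [|n IH]; first by rewrite leqn0 => /eqP ->.
rewrite leq_eqVlt => /orP [/eqP -> //|]; rewrite ltnS => /IH H.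
exact: leq_trans H (fib_step n).
Qed.

Lemma fib_pos n : 0 < fib n.+1.
Proof. elim: n => [|n IH] //=. case: n IH => [|n] //= IH. lia. Qed.

Lemma fib_gt n : n < fib n.+2.
Proof.
elim: n => [|n IH] //. have e : fib n.+3 = fib n.+2 + fib n.+1 := erefl.
have := fib_pos n. lia.
Qed.

Lemma S_succ c a : S c a.+1 = S c a + nth 0 c a * fib (2 * a.+1).
Proof. by rewrite /S big_ord_recr. Qed.

Definition closedA (c : seq nat) a :=
  forall i, i < a -> nth 0 c i = 2 -> exists k, i < k < a /\ nth 0 c k = 0.

Lemma bound c : cg_admissible c -> forall a,
  S c a < fib (2*a).+2 /\ (closedA c a -> S c a < fib (2*a).+1).
Proof.
move=> [Hle Hp]; elim=> [|a [IH1 IH2]]; first by rewrite /S big_ord0.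
rewrite S_succ.
have e2 : 2 * a.+1 = (2*a).+2 by lia.
rewrite e2.
have e4 : fib (2*a).+4 = fib (2*a).+3 + fib (2*a).+2 := erefl.
have e3 : fib (2*a).+3 = fib (2*a).+2 + fib (2*a).+1 := erefl.
have hd := Hle a.
case Hd: (nth 0 c a) hd => [|[|[|d]]] // _.
- split; lia.
- split; first lia.
  move=> Hc. have : closedA c a.
    move=> i Hi H2. have [k [Hk1 Hk2]] := Hc i (leq_trans Hi (leqnSn _)) H2.
    exists k; split => //. have : k != a by apply/eqP => E; rewrite E Hd in Hk2.
    lia.
  move/IH2. lia.
- have Hca : closedA c a.
    move=> i Hi H2. have [k [Hk1 Hk2]] := Hp i a Hi H2 Hd. by exists k.
  have := IH2 Hca. split; first lia.
  move=> Hc. have [k [Hk _]] := Hc a (leqnn _) Hd. lia.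
Qed.

Lemma S_stable c t : (forall i, t <= i -> nth 0 c i = 0) -> forall a, t <= a -> S c a = S c t.
Proof.
move=> Hz; elim=> [|a IH]; first by rewrite leqn0 => /eqP ->.
rewrite leq_eqVlt => /orP [/eqP -> //|]; rewrite ltnS => Ht.
by rewrite S_succ (Hz a Ht) mul0n addn0 IH.
Qed.

Lemma value_S c : cg_value c = S c (size c).
Proof. by []. Qed.

Lemma S_rcons c x : S (rcons c x) (size c).+1 = S c (size c) + x * fib (2 * (size c).+1).
Proof.
rewrite S_succ nth_rcons ltnn eqxx; congr (_ + _).
apply: eq_bigr => i _. by rewrite nth_rcons ltn_ord.
Qed.

Definition closedS c := closedA c (size c).

Lemma exist t :
  (forall n, n < fib (2*t).+2 -> exists c, size c = t /\ cg_admissible c /\ cg_value c = n) /\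
  (forall n, n < fib (2*t).+1 -> exists c, size c = t /\ cg_admissible c /\ closedS c /\ cg_value c = n).
Proof.
elim: t => [|t [IH1 IH2]].
  have v0 : cg_value [::] = 0 by rewrite value_S /S big_ord0.
  have a0 : cg_admissible [::] by split=> [i|i j _]; rewrite nth_nil.
  split=> n; rewrite muln0 /= ltnS leqn0 => /eqP ->; exists [::].
    by [].
  by split=> //; split=> //; split=> // i.
have e2 : 2 * t.+1 = (2*t).+2 by lia.
have e4 : fib (2*t).+4 = fib (2*t).+3 + fib (2*t).+2 := erefl.
have e3 : fib (2*t).+3 = fib (2*t).+2 + fib (2*t).+1 := erefl.
have adm_r : forall c x, x <= 2 -> cg_admissible c -> (x = 2 -> closedS c) ->
    cg_admissible (rcons c x).
  move=> c x Hx [Hle Hp] Hcl; split.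
    move=> i; rewrite nth_rcons; case: ifP => _ //; case: ifP => _ //.
  move=> i j Hij; rewrite !nth_rcons.
  case: (ltnP j (size c)) => Hj.
    rewrite (ltn_trans Hij Hj) => Hi Hj2.
    have [k [Hk1 Hk2]] := Hp i j Hij Hi Hj2.
    exists k; split => //. by rewrite nth_rcons (ltn_trans (proj2 (andP Hk1)) Hj).
  move=> Hi; case: eqP => Ej; last by [].
  have Hi2 : i < size c by lia.
  rewrite Hi2 in Hi; move=> Hx2; have [k [Hk1 Hk2]] := Hcl Hx2 i Hi2 Hi.
  exists k; split; first lia. by rewrite nth_rcons (proj2 (andP Hk1)).
have val_r : forall c x, size c = t -> cg_value (rcons c x) = cg_value c + x * fib (2*t).+2.
  move=> c x Hs; by rewrite value_S size_rcons S_rcons -value_S Hs e2.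
split=> n Hn.
- case: (ltnP n (fib (2*t).+2)) => H1.
    have [c [Hs [Ha Hv]]] := IH1 n H1.
    exists (rcons c 0); rewrite size_rcons Hs; split=> //; split.
      by apply: adm_r.
    rewrite val_r // Hv; lia.
  case: (ltnP n (2 * fib (2*t).+2)) => H2.
    have [c [Hs [Ha Hv]]] := IH1 (n - fib (2*t).+2) ltac:(lia).
    exists (rcons c 1); rewrite size_rcons Hs; split=> //; split.
      by apply: adm_r.
    rewrite val_r // Hv. lia.
  have [c [Hs [Ha [Hc Hv]]]] := IH2 (n - 2 * fib (2*t).+2) ltac:(rewrite e2 in Hn; lia).
  exists (rcons c 2); rewrite size_rcons Hs; split=> //; split.
    by apply: adm_r.
  rewrite val_r // Hv. lia.
- rewrite e2 in Hn.
  case: (ltnP n (fib (2*t).+2)) => H1.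
    have [c [Hs [Ha Hv]]] := IH1 n H1.
    exists (rcons c 0); rewrite size_rcons Hs; split=> //; split.
      by apply: adm_r.
    split; last by rewrite val_r // Hv; lia.
    move=> i; rewrite /closedS size_rcons => Hi; rewrite nth_rcons.
    case: ifP => Hi2; last by case: ifP.
    move=> _; exists (size c); split; first lia. by rewrite nth_rcons ltnn eqxx.
  have [c [Hs [Ha [Hc Hv]]]] := IH2 (n - fib (2*t).+2) ltac:(lia).
  exists (rcons c 1); rewrite size_rcons Hs; split=> //; split.
    by apply: adm_r.
  split; last by rewrite val_r // Hv; lia.
  move=> i; rewrite /closedS size_rcons => Hi; rewrite nth_rcons.
  case: ifP => Hi2; last by case: ifP => _ //; case: ifP.
  move=> H2; have [k [Hk1 Hk2]] := Hc i Hi2 H2.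
  exists k; split; first lia. by rewrite nth_rcons (proj2 (andP Hk1)).
Qed.

Lemma max_ex (s : seq nat) X : X < seq_max s -> exists y, y \in s /\ X < y.
Proof.
rewrite /seq_max; elim: s => [|x s IH]; first by rewrite big_nil.
rewrite big_cons => H.
case: (ltnP X x) => Hx; first by exists x; rewrite mem_head.
have : X < \max_(j <- s) j by move: H Hx; rewrite /maxn; case: ifP => _ //; lia.
move/IH => [y [Hy Hy2]]; exists y; split => //. by rewrite in_cons Hy orbT.
Qed.

Lemma mem_CG c y : y \in CGset c <-> exists j, j < size c /\ nth 0 c j != 0 /\ y = fib (2 * j.+1).
Proof.
rewrite /CGset; split.
  move/mapP => [j]; rewrite mem_filter mem_iota add0n => /andP [H1 /andP [_ H2]] ->.
  by exists j.
move=> [j [H1 [H2 ->]]]; apply/mapP; exists j => //.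
by rewrite mem_filter mem_iota add0n H2 H1.
Qed.

Lemma term_le c j : j < size c -> nth 0 c j != 0 -> fib (2 * j.+1) <= cg_value c.
Proof.
move=> Hj Hn; rewrite value_S /S (bigD1 (Ordinal Hj)) //=.
apply: leq_trans (leq_addr _ _). apply: leq_pmull. by rewrite lt0n.
Qed.

Theorem corollary3p2 (k n m : nat) :
  1 <= k -> in_A k n -> in_A k m ->
  (forall cn cm, is_CG n cn -> is_CG m cm ->
     seq_max (CGset cn) < seq_max (CGset cm)) ->
  n < m.
Proof.
move=> _ _ _ H.
have [cn [_ [Han Hvn]]] := (proj1 (exist n)) n ltac:(apply: leq_trans (fib_gt n) (fib_mono _ _ _); lia).
have [cm [_ [Ham Hvm]]] := (proj1 (exist m)) m ltac:(apply: leq_trans (fib_gt m) (fib_mono _ _ _); lia).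
have := H cn cm (conj Han Hvn) (conj Ham Hvm).
move/max_ex => [y [/mem_CG [j [Hj [Hnz ->]]] Hlt]].
have Hym := @term_le cm j Hj Hnz; rewrite Hvm in Hym.
have Hz : forall i, j <= i -> nth 0 cn i = 0.
  move=> i Hi; case: (ltnP i (size cn)) => Hs; last by rewrite nth_default.
  apply/eqP; apply: contraT => Hnz'.
  have Hin : fib (2 * i.+1) \in CGset cn by apply/mem_CG; exists i.
  have := @leq_bigmax_seq _ (CGset cn) xpredT (fun x => x) _ Hin isT.
  rewrite -/(seq_max _) => Hle.
  have := fib_mono (2 * j.+1) (2 * i.+1) ltac:(lia); lia.
have Hn : n = S cn j.
  rewrite -Hvn value_S.
  rewrite -(@S_stable cn j Hz _ (leq_maxl j (size cn))).
  apply/esym; apply: (@S_stable cn (size cn)); last exact: leq_maxr.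
  move=> i Hi; exact: nth_default.
have [Hb _] := @bound cn Han j.
rewrite Hn; apply: leq_trans Hb _.
have -> : (2 * j).+2 = 2 * j.+1 by lia.
exact: Hym.
Qed.
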